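(* For every integer $n \geq 3$, the chromatic number of the Kneser graph of triangulations of a convex $n$-gon satisfies \[\chi(\mathrm{KG}(\mathcal{T}_n)) = n-2.\]
   Context: Label the vertices of a convex $n$-gon by $1,2,\dots,n$ in cyclic order. Let $\mathrm{Diag}_n = \{\{i,j\} \subseteq [n] : i-j \not\equiv \pm 1 \pmod n\}$ be the set of diagonals. Two diagonals cross if they meet in the interior of the polygon (equivalently, their endpoints are four distinct labels that interleave in the cyclic order). A triangulation is identified with the set of its diagonals (a maximal set of pairwise noncrossing diagonals, of size $n-3$), and $\mathcal{T}_n$ denotes the set of all triangulations. For a finite set system $\mathcal{F}$, the Kneser graph $\mathrm{KG}(\mathcal{F})$ has vertex set $\mathcal{F}$, with $F, F'$ adjacent iff $F \cap F' = \emptyset$. Thus two triangulations are adjacent iff they share no diagonal. *)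

(* Defs.v *)
From mathcomp Require Import all_boot.
Set Implicit Arguments. Unset Strict Implicit. Unset Printing Implicit Defensive.

(* Vertices of the convex n-gon are labelled 0,...,n-1 (type 'I_n) in cyclic order. *)

Definition cyc_adj (n : nat) (i j : 'I_n) : bool :=
  (i.+1 %% n == j %% n) || (j.+1 %% n == i %% n).

Definition is_diag (n : nat) (d : {set 'I_n}) : bool :=
  (#|d| == 2) && [forall i in d, forall j in d, (i != j) ==> ~~ cyc_adj i j].

(* Two diagonals cross: their endpoints are four distinct labels that
   interleave in the cyclic order: with d1 = {a,b}, a < b, exactly one
   endpoint of d2 lies strictly between a and b. *)
Definition crossing (n : nat) (d1 d2 : {set 'I_n}) : bool :=
  [disjoint d1 & d2] &&
  [exists a in d1, exists b in d1,
     (a < b) && (#|[set x in d2 | (a < x) && (x < b)]| == 1)].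

Definition is_triangulation (n : nat) (T : {set {set 'I_n}}) : Prop :=
  (forall d, d \in T -> is_diag d) /\
  (forall d e, d \in T -> e \in T -> ~~ crossing d e) /\
  (forall d, is_diag d -> d \notin T -> exists2 e, e \in T & crossing d e).

Definition kneser_triang_colorable (n k : nat) : Prop :=
  exists f : {set {set 'I_n}} -> nat,
    (forall T, is_triangulation T -> f T < k) /\
    (forall T T', is_triangulation T -> is_triangulation T' -> T != T' ->
        [disjoint T & T'] -> f T != f T').

Definition kneser_triang_chromatic_number (n c : nat) : Prop :=
  kneser_triang_colorable n c /\ (forall k, kneser_triang_colorable n k -> c <= k).

(* Main.v *)
Require Import Defs.
From mathcomp Require Import all_boot zify.
Set Implicit Arguments. Unset Strict Implicit. Unset Printing Implicit Defensive.

Definition cadj (m i j : nat) : bool :=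
  (i.+1 %% m == j %% m) || (j.+1 %% m == i %% m).

Definition gdiag N (m : nat) (d : {set 'I_N.+1}) : bool :=
  [&& #|d| == 2, [forall i in d, forall j in d, (i != j) ==> ~~ cadj m i j]
    & [forall i in d, i < m]].

Definition gtri N (m : nat) (T : {set {set 'I_N.+1}}) : Prop :=
  (forall d, d \in T -> gdiag m d) /\
  (forall d e, d \in T -> e \in T -> ~~ crossing d e) /\
  (forall d, gdiag m d -> d \notin T -> exists2 e, e \in T & crossing d e).

Lemma forall2 (T : finType) (x y : T) (P : pred T) :
  [forall i in [set x; y], P i] = P x && P y.
Proof.
apply/forallP/andP => [H|[Hx Hy] i].
  by split; [move: (H x) | move: (H y)]; rewrite !inE eqxx ?orbT.
by apply/implyP; rewrite !inE => /orP [] /eqP ->.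
Qed.

Lemma cadjE m x y : x < y -> y < m ->
  cadj m x y = (x.+1 == y) || ((x == 0) && (y.+1 == m)).
Proof.
move=> xy ym; rewrite /cadj (@modn_small x) ?(@modn_small y) ?(@modn_small x.+1); try lia.
case: (ltngtP y.+1 m) => h; [rewrite modn_small // | lia | ].
  case: (x.+1 == y) => //=; lia.
rewrite h modnn; case: (x.+1 == y) => //=; lia.
Qed.

Lemma cadjC m x y : cadj m x y = cadj m y x.
Proof. by rewrite /cadj orbC. Qed.

Lemma ord_neq N (x y : 'I_N) : x < y -> x != y.
Proof. by move=> h; rewrite -val_eqE /= neq_ltn h. Qed.

Lemma gdiag_pair N m (x y : 'I_N.+1) : x < y ->
  gdiag m [set x; y] = [&& y < m, x.+1 < y & ~~ ((x == 0 :> nat) && (y.+1 == m))].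
Proof.
move=> xy; rewrite /gdiag cards2 ord_neq //= !forall2 !eqxx /= (ord_neq xy).
rewrite eq_sym (ord_neq xy) /= (cadjC m y x) !andbT andbb.
case: (ltnP y m) => ym; last by rewrite !andbF.
rewrite (cadjE xy ym) (_ : x < m); last by lia.
rewrite /= !andbT negb_or; congr (_ && _); lia.
Qed.

Lemma set2C (T : finType) (x y : T) : [set x; y] = [set y; x].
Proof. by apply/setP => z; rewrite !inE orbC. Qed.

Lemma card2_ord N (d : {set 'I_N}) : #|d| == 2 -> exists x y : 'I_N, x < y /\ d = [set x; y].
Proof.
case/cards2P => x [y [xy ->]].
case: (ltngtP x y) => h; first by exists x, y.
  by exists y, x; rewrite set2C.
by move: xy; rewrite -val_eqE /= h eqxx.
Qed.

Lemma gdiag_card N m (d : {set 'I_N.+1}) : gdiag m d -> #|d| == 2.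
Proof. by case/and3P. Qed.

Lemma disjP (T : finType) (A B : {set T}) :
  reflect (forall x, x \in A -> x \in B -> False) [disjoint A & B].
Proof.
rewrite disjoint_subset; apply: (iffP subsetP) => H x xA.
  by move=> xB; move: (H x xA); rewrite inE xB.
by rewrite inE; apply/negP => /(H x xA).
Qed.


Lemma card_sep2 (T : finType) (p q : T) (P : pred T) : p != q ->
  #|[set x in [set p; q] | P x]| = P p + P q.
Proof.
move=> pq.
have E : forall A : {set T}, (forall z, (z \in A) = (z \in [set p; q]) && P z) -> #|[set x in [set p; q] | P x]| = #|A|.
  by move=> A HA; rewrite (_ : [set x in [set p; q] | P x] = A) //; apply/setP => z; rewrite HA !inE.
case Pp: (P p); case Pq: (P q).
- rewrite (E [set p; q]) ?cards2 ?pq // => z; rewrite !inE.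
  by case: eqP => [->|_]; case: eqP => [->|_]; rewrite ?Pp ?Pq.
- rewrite (E [set p]) ?cards1 // => z; rewrite !inE.
  case: eqP => [->|_]; rewrite ?Pp //=; case: eqP => [->|_]; by rewrite ?Pq ?andbF.
- rewrite (E [set q]) ?cards1 // => z; rewrite !inE.
  case: eqP => [->|_]; rewrite ?Pp //= ?andbF.
    by case: eqP => // E1; move: pq; rewrite E1 eqxx.
  by case: eqP => [->|_]; rewrite ?Pq.
- rewrite (E set0) ?cards0 // => z; rewrite !inE.
  by case: eqP => [->|_]; case: eqP => [->|_]; rewrite ?Pp ?Pq ?andbF.
Qed.

Lemma crossE N (a b p q : 'I_N) : a < b -> p < q ->
  crossing [set a; b] [set p; q] = ((a < p < b) && (b < q)) || ((p < a) && (a < q < b)).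
Proof.
move=> ab pq; rewrite /crossing.
have -> : [disjoint [set a; b] & [set p; q]] =
   [&& a != p, a != q, b != p & b != q].
  apply/disjP/and4P.
    move=> H; split; apply/eqP=> E; [apply: (H a) | apply: (H a) | apply: (H b) | apply: (H b)];
    by rewrite !inE ?E eqxx ?orbT.
  case=> ap aq bp bq x; rewrite !inE => /orP[]/eqP-> /orP[]/eqP E;
    [move: ap|move: aq|move: bp|move: bq]; by rewrite E eqxx.
have -> : [exists a' in [set a; b], exists b' in [set a; b],
     (a' < b') && (#|[set x in [set p; q] | (a' < x) && (x < b')]| == 1)] =
   ((a < p < b) + (a < q < b) == 1).
  apply/existsP/idP.
    case=> a'; rewrite !inE => /andP[] /orP[]/eqP-> /existsP[b'];
      rewrite !inE => /andP[] /orP[]/eqP-> /andP[lt];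
      rewrite card_sep2 ?ord_neq //; lia.
  move=> H; exists a; rewrite !inE eqxx /=; apply/existsP; exists b.
  by rewrite !inE eqxx orbT ab card_sep2 ?ord_neq.
rewrite -!val_eqE /=.
lia.
Qed.

Lemma diag_of N m (d : {set 'I_N.+1}) : gdiag m d ->
  exists x y : 'I_N.+1, [/\ x < y, d = [set x; y], y < m, x.+1 < y &
     ~~ ((x == 0 :> nat) && (y.+1 == m))].
Proof.
move=> g; have [x [y [xy E]]] := card2_ord (gdiag_card g).
by move: g; rewrite E gdiag_pair // => /and3P[*]; exists x, y; split.
Qed.

Lemma gdiag_lt N m (d : {set 'I_N.+1}) x : gdiag m d -> x \in d -> x < m.
Proof. by case/and3P => _ _ /forallP/(_ x)/implyP. Qed.

Definition apex N (T : {set {set 'I_N.+1}}) : nat :=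
  \max_(x : 'I_N.+1 | (x == 1 :> nat) || ([set ord0; x] \in T)) x.

Lemma apex_ub N (T : {set {set 'I_N.+1}}) (x : 'I_N.+1) :
  [set ord0; x] \in T -> x <= apex T.
Proof. by move=> h; apply: leq_bigmax_cond; rewrite h orbT. Qed.

Lemma apex_ge1 N (T : {set {set 'I_N.+1}}) : 0 < N -> 1 <= apex T.
Proof.
move=> N0; apply: (@bigmax_sup _ (inord 1)); rewrite inordK //; lia.
Qed.

Lemma apex_wit N (T : {set {set 'I_N.+1}}) : 0 < N ->
  exists x : 'I_N.+1, nat_of_ord x = apex T /\ ((x == 1 :> nat) || ([set ord0; x] \in T)).
Proof.
move=> N0.
case: (@existsP _ (fun x : 'I_N.+1 => ((x == 1 :> nat) || ([set ord0; x] \in T)) && (nat_of_ord x == apex T))).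
  by case=> x /andP[h /eqP e]; exists x.
move=> H; exfalso.
have : apex T <= (apex T).-1.
  apply/bigmax_leqP => x Px.
  have le : x <= apex T by exact: (leq_bigmax_cond x Px).
  have : nat_of_ord x != apex T by apply/negP => e; apply: H; exists x; rewrite Px e.
  lia.
have := apex_ge1 T N0; lia.
Qed.

Lemma apex_eq N (T T' : {set {set 'I_N.+1}}) :
  (forall x : 'I_N.+1, ([set ord0; x] \in T) = ([set ord0; x] \in T')) -> apex T = apex T'.
Proof. by move=> H; apply: eq_bigl => x; rewrite H. Qed.

Lemma no_straddle N m (T : {set {set 'I_N.+1}}) (p q : 'I_N.+1) : 0 < N ->
  gtri m T -> [set p; q] \in T -> p < q -> ~~ (p < apex T < q).
Proof.
move=> N0 [Hd [Hc Hm]] pqT pq; apply/negP => /andP[l1 l2].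
have [x [xv /orP[x1|x0T]]] := apex_wit T N0.
  have p0 : p = ord0 by apply: val_inj => /=; lia.
  move: pqT; rewrite p0 => /apex_ub; lia.
case: (posnP p) => p0.
  have p0' : p = ord0 by apply: val_inj.
  move: pqT; rewrite p0' => /apex_ub; lia.
have := Hc _ _ x0T pqT; rewrite crossE /=; [|lia|lia].
by rewrite p0 xv l1 l2.
Qed.

Lemma apex_le N m (T : {set {set 'I_N.+1}}) : 0 < N -> 3 <= m ->
  gtri m T -> apex T <= m - 2.
Proof.
move=> N0 m3 [Hd _]; have [x [xv /orP[x1|x0T]]] := apex_wit T N0; first lia.
have [a [b [ab E ? ? ?]]] := diag_of (Hd _ x0T).
have : (ord0 : 'I_N.+1) \in [set a; b] by rewrite -E !inE eqxx.
have : x \in [set a; b] by rewrite -E !inE eqxx orbT.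
rewrite !inE -!val_eqE /=; lia.
Qed.

Lemma K4 N m (T : {set {set 'I_N.+1}}) (v : 'I_N.+1) : 0 < N ->
  gtri m T -> nat_of_ord v = apex T -> 2 <= apex T -> [set ord0; v] \in T.
Proof.
move=> N0 _ vv a2; have [x [xv /orP[x1|x0T]]] := apex_wit T N0; first lia.
by have -> : v = x by apply: val_inj => /=; lia.
Qed.

Lemma K3 N m (T : {set {set 'I_N.+1}}) (v w : 'I_N.+1) : 0 < N ->
  gtri m T -> nat_of_ord v = apex T -> nat_of_ord w = m.-1 -> apex T + 2 < m ->
  [set v; w] \in T.
Proof.
move=> N0 g vv ww am; have a1 := apex_ge1 T N0.
case: (boolP ([set v; w] \in T)) => // nin.
have vw : v < w by lia.
have gd : gdiag m [set v; w] by rewrite gdiag_pair //; apply/and3P; split; lia.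
have g' := g; case: g' => [Hd [Hc Hm]].
have [e eT cr] := Hm _ gd nin.
have [p [q [pq E ? ? ?]]] := diag_of (Hd _ eT).
move: cr; rewrite E crossE //.
have eT' : [set p; q] \in T by rewrite -E.
have := no_straddle N0 g eT' pq.
lia.
Qed.

Lemma gdiag_is N (d : {set 'I_N.+1}) : gdiag N.+1 d = is_diag d.
Proof.
rewrite /gdiag /is_diag.
have -> : [forall i in d, i < N.+1] by apply/forallP => i; apply/implyP => _; exact: ltn_ord.
by rewrite andbT.
Qed.

Lemma tri_eq N (T : {set {set 'I_N.+1}}) : is_triangulation T <-> gtri N.+1 T.
Proof.
split; case=> [H1 [H2 H3]].
  split; [by move=> d /H1; rewrite gdiag_is | split => // d].
  by rewrite gdiag_is; apply: H3.
split; [by move=> d /H1; rewrite -gdiag_is | split => // d].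
by rewrite -gdiag_is; apply: H3.
Qed.

Lemma no_gdiag3 N (d : {set 'I_N.+1}) : ~~ gdiag 3 d.
Proof. by apply/negP => /diag_of [x [y [? ? ? ? ?]]]; lia. Qed.

Lemma gtri3_empty N (T : {set {set 'I_N.+1}}) : gtri 3 T -> T = set0.
Proof.
case=> H1 _; apply/setP => d; rewrite inE; apply/negP => /H1.
by rewrite (negbTE (no_gdiag3 _)).
Qed.

Lemma upper N : 2 <= N -> kneser_triang_colorable N.+1 (N.+1 - 2).
Proof.
move=> N2; have N0 : 0 < N by lia.
have m3 : 3 <= N.+1 by lia.
exists (fun T => (apex T).-1); split.
  move=> T /tri_eq g; have := apex_le N0 m3 g; have := apex_ge1 T N0; lia.
move=> T T' /tri_eq g /tri_eq g' neq /disjP disj; apply/negP => /eqP e.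
have a1 := apex_ge1 T N0; have a1' := apex_ge1 T' N0.
have ea : apex T = apex T' by lia.
have al := apex_le N0 m3 g.
case: (ltngtP N 2) => [|N3|N2']; first lia.
  case: (leqP 2 (apex T)) => a2.
    pose v : 'I_N.+1 := inord (apex T).
    have vv : nat_of_ord v = apex T by rewrite inordK; lia.
    apply: (disj [set ord0; v]); [exact: (K4 N0 g vv a2) | apply: (K4 N0 g'); lia].
  pose v : 'I_N.+1 := inord 1.
  pose w : 'I_N.+1 := inord N.
  have vv : nat_of_ord v = 1 by rewrite inordK; lia.
  have ww : nat_of_ord w = N.+1.-1 by rewrite inordK.
  apply: (disj [set v; w]); [apply: (K3 N0 g) | apply: (K3 N0 g')]; rewrite // ?vv; lia.
have e3 : N.+1 = 3 by lia.
move: g g'; rewrite e3 => /gtri3_empty E1 /gtri3_empty E2.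
by move: neq; rewrite E1 E2 eqxx.
Qed.

Lemma lift_diag N m (d : {set 'I_N.+1}) : gdiag m d -> gdiag m.+1 d.
Proof.
move=> g; have [x [y [xy E ? ? ?]]] := diag_of g.
by rewrite E gdiag_pair //; apply/and3P; split; lia.
Qed.

Definition Aset N m (S : {set {set 'I_N.+1}}) :=
  S :|: [set [set ord0; (inord m.-1 : 'I_N.+1)]].

Lemma gtri_A N m (S : {set {set 'I_N.+1}}) : 3 <= m -> m <= N ->
  gtri m S -> gtri m.+1 (Aset m S).
Proof.
move=> m3 mN g; have g0 := g; case: g0 => [Hd [Hc Hm]].
rewrite /Aset; set o1 : 'I_N.+1 := inord m.-1.
have o1v : nat_of_ord o1 = m.-1 by rewrite inordK; lia.
have o1lt : (ord0 : 'I_N.+1) < o1 by rewrite /= o1v; lia.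
split; [|split].
- move=> d; rewrite !inE => /orP[/Hd/lift_diag // | /eqP ->].
  by rewrite gdiag_pair //=; apply/and3P; split; lia.
- move=> d e; rewrite !inE => /orP[dS|/eqP->] /orP[eS|/eqP->].
  + exact: Hc.
  + have [a [b [ab E ? ? ?]]] := diag_of (Hd _ dS).
    by rewrite E crossE //=; lia.
  + have [a [b [ab E ? ? ?]]] := diag_of (Hd _ eS).
    by rewrite E crossE //=; lia.
  + by rewrite crossE //=; lia.
- move=> d gd; rewrite inE negb_or => /andP[dS dn].
  have [x [y [xy E ym x1 nn]]] := diag_of gd.
  case: (ltngtP y m) => [ylt||yeq]; [|lia|].
  + case: (boolP ((x == 0 :> nat) && (y == m.-1 :> nat))) => h.
      exfalso; move: dn; rewrite inE E.
      have -> : x = ord0 by apply: val_inj => /=; lia.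
      have -> : y = o1 by apply: val_inj => /=; lia.
      by rewrite eqxx.
    have gm : gdiag m d by rewrite E gdiag_pair //; apply/and3P; split; lia.
    have [e eS cr] := Hm _ gm dS.
    by exists e => //; rewrite inE eS.
  + exists [set ord0; o1]; first by rewrite !inE eqxx orbT.
    by rewrite E crossE //=; lia.
Qed.

Lemma apex_A N m (S : {set {set 'I_N.+1}}) : 3 <= m -> m <= N ->
  gtri m S -> apex (Aset m S) = m.-1.
Proof.
move=> m3 mN g.
have h1 := apex_le (_ : 0 < N) (_ : 3 <= m.+1) (gtri_A m3 mN g).
have h2 : (inord m.-1 : 'I_N.+1) <= apex (Aset m S).
  by apply: apex_ub; rewrite !inE eqxx orbT.
move: h2; rewrite inordK; lia.
Qed.

Definition Bset N m (S : {set {set 'I_N.+1}}) :=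
  S :|: [set [set (inord (apex S) : 'I_N.+1); (inord m : 'I_N.+1)]].

Lemma gtri_B N m (S : {set {set 'I_N.+1}}) : 3 <= m -> m <= N ->
  gtri m S -> gtri m.+1 (Bset m S).
Proof.
move=> m3 mN g; have g0 := g; case: g0 => [Hd [Hc Hm]].
have N0 : 0 < N by lia.
have a1 := apex_ge1 S N0; have al := apex_le N0 m3 g.
rewrite /Bset; set vo : 'I_N.+1 := inord (apex S); set om : 'I_N.+1 := inord m.
have vv : nat_of_ord vo = apex S by rewrite inordK; lia.
have omv : nat_of_ord om = m by rewrite inordK; lia.
have vom : vo < om by rewrite vv omv; lia.
split; [|split].
- move=> d; rewrite !inE => /orP[/Hd/lift_diag // | /eqP ->].
  by rewrite gdiag_pair //=; apply/and3P; split; lia.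
- move=> d e; rewrite !inE => /orP[dS|/eqP->] /orP[eS|/eqP->].
  + exact: Hc.
  + have [a [b [ab E ? ? ?]]] := diag_of (Hd _ dS).
    have dS' : [set a; b] \in S by rewrite -E.
    have := no_straddle N0 g dS' ab.
    by rewrite E crossE //=; lia.
  + have [a [b [ab E ? ? ?]]] := diag_of (Hd _ eS).
    have eS' : [set a; b] \in S by rewrite -E.
    have := no_straddle N0 g eS' ab.
    by rewrite E crossE //=; lia.
  + by rewrite crossE //=; lia.
- move=> d gd; rewrite !inE negb_or => /andP[dS dn].
  have [x [y [xy E ym x1 nn]]] := diag_of gd.
  case: (ltngtP y m) => [ylt||yeq]; [|lia|].
  + case: (boolP ((x == 0 :> nat) && (y == m.-1 :> nat))) => h.
      exists [set vo; om]; first by rewrite !inE eqxx orbT.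
      by rewrite E crossE //=; lia.
    have gm : gdiag m d by rewrite E gdiag_pair //; apply/and3P; split; lia.
    have [e eS cr] := Hm _ gm dS.
    by exists e => //; rewrite inE eS.
  + have xv : nat_of_ord x != apex S.
      apply/negP => /eqP xv; move: dn; rewrite E.
      have -> : x = vo by apply: val_inj => /=; lia.
      have -> : y = om by apply: val_inj => /=; lia.
      by rewrite eqxx.
    case: (ltnP x (apex S)) => xa.
      exists [set ord0; vo]; first by rewrite inE (K4 N0 g vv) //; lia.
      by rewrite E crossE //=; lia.
    pose w : 'I_N.+1 := inord m.-1.
    have wv : nat_of_ord w = m.-1 by rewrite inordK; lia.
    exists [set vo; w]; first by rewrite inE (K3 N0 g vv wv) //; lia.
    by rewrite E crossE //=; lia.
Qed.

Lemma apex_B N m (S : {set {set 'I_N.+1}}) : 3 <= m -> m <= N ->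
  gtri m S -> apex (Bset m S) = apex S.
Proof.
move=> m3 mN g; have N0 : 0 < N by lia.
have a1 := apex_ge1 S N0; have al := apex_le N0 m3 g.
rewrite /Bset; set vo : 'I_N.+1 := inord (apex S); set om : 'I_N.+1 := inord m.
have vv : nat_of_ord vo = apex S by rewrite inordK; lia.
have omv : nat_of_ord om = m by rewrite inordK; lia.
apply: apex_eq => x; rewrite !inE; case: eqP => [E|_]; last by rewrite orbF.
exfalso.
have : om \in [set ord0; x] by rewrite E !inE eqxx orbT.
have : vo \in [set ord0; x] by rewrite E !inE eqxx.
rewrite !inE -!val_eqE /= vv omv; lia.
Qed.

Definition Fset N m : {set {set 'I_N.+1}} :=
  [set d | [exists j : 'I_N.+1, [&& 1 <= j, j.+2 <= m & d == [set j; (inord m : 'I_N.+1)]]]].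

Lemma gtri_F N m : 3 <= m -> m <= N -> gtri m.+1 (Fset N m).
Proof.
move=> m3 mN; rewrite /Fset; set om : 'I_N.+1 := inord m.
have omv : nat_of_ord om = m by rewrite inordK; lia.
split; [|split].
- move=> d; rewrite inE => /existsP[j /and3P[j1 j2 /eqP->]].
  by rewrite gdiag_pair ?omv //=; [apply/and3P; split; lia | lia].
- move=> d e; rewrite !inE => /existsP[j /and3P[j1 j2 /eqP->]]
     /existsP[j' /and3P[j1' j2' /eqP->]].
  by rewrite crossE ?omv //; lia.
- move=> d gd; rewrite inE => dn.
  have [x [y [xy E ym x1 nn]]] := diag_of gd.
  case: (ltngtP y m) => [ylt||yeq]; [|lia|].
  + pose j : 'I_N.+1 := inord x.+1.
    have jv : nat_of_ord j = x.+1 by rewrite inordK; lia.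
    exists [set j; om].
      by rewrite inE; apply/existsP; exists j; rewrite jv eqxx andbT; apply/andP; split; lia.
    by rewrite E crossE ?jv ?omv //=; lia.
  + exfalso; move/existsP: dn; apply; exists x; rewrite E.
    have -> : y = om by apply: val_inj => /=; lia.
    by rewrite eqxx andbT; apply/andP; split; lia.
Qed.

Lemma apex_F N m : 3 <= m -> m <= N -> apex (Fset N m) = 1.
Proof.
move=> m3 mN; have N0 : 0 < N by lia.
have := apex_ge1 (Fset N m) N0.
have : apex (Fset N m) <= 1; last lia.
apply/bigmax_leqP => x /orP[/eqP-> //|].
rewrite inE => /existsP[j /and3P[j1 j2 /eqP E]].
have : (ord0 : 'I_N.+1) \in [set j; (inord m : 'I_N.+1)] by rewrite -E !inE eqxx.
rewrite !inE -!val_eqE /= inordK; lia.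
Qed.

Lemma disj_AF N m (S : {set {set 'I_N.+1}}) : 3 <= m -> m <= N -> gtri m S ->
  [disjoint Aset m S & Fset N m].
Proof.
move=> m3 mN [Hd _]; apply/disjP => d; rewrite /Aset /Fset !inE.
move=> /orP[dS|/eqP->] /existsP[j /and3P[_ _ /eqP E]].
  have : (inord m : 'I_N.+1) < m by apply: (gdiag_lt (Hd _ dS)); rewrite E !inE eqxx orbT.
  rewrite inordK; lia.
have : (inord m : 'I_N.+1) \in [set ord0; (inord m.-1 : 'I_N.+1)] by rewrite E !inE eqxx orbT.
rewrite !inE -!val_eqE /= !inordK; lia.
Qed.

Lemma disj_BA N m (S T : {set {set 'I_N.+1}}) : 3 <= m -> m <= N -> gtri m S -> gtri m T ->
  [disjoint S & T] -> [disjoint Bset m S & Aset m T].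
Proof.
move=> m3 mN [HdS _] [HdT _] /disjP dST; apply/disjP => d; rewrite /Aset /Bset !inE.
move=> /orP[dS|/eqP->] /orP[dT|/eqP E].
- exact: dST dS dT.
- have := HdS _ dS; rewrite E gdiag_pair /=; last by rewrite inordK; lia.
  rewrite inordK; lia.
- have : (inord m : 'I_N.+1) < m by apply: (gdiag_lt (HdT _ dT)); rewrite !inE eqxx orbT.
  rewrite inordK; lia.
- have : (inord m : 'I_N.+1) \in [set ord0; (inord m.-1 : 'I_N.+1)] by rewrite -E !inE eqxx orbT.
  rewrite !inE -!val_eqE /= !inordK; lia.
Qed.

Lemma disj_BB N m (S T : {set {set 'I_N.+1}}) : 3 <= m -> m <= N -> gtri m S -> gtri m T ->
  [disjoint S & T] -> apex S != apex T -> [disjoint Bset m S & Bset m T].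
Proof.
move=> m3 mN gS gT /disjP dST ne.
have N0 : 0 < N by lia.
have := apex_le N0 m3 gS; have := apex_le N0 m3 gT.
case: gS => HdS _; case: gT => HdT _ a1 a2.
apply/disjP => d; rewrite /Bset !inE.
move=> /orP[dS|/eqP->] /orP[dT|/eqP E].
- exact: dST dS dT.
- have : (inord m : 'I_N.+1) < m by apply: (gdiag_lt (HdS _ dS)); rewrite E !inE eqxx orbT.
  rewrite inordK; lia.
- have : (inord m : 'I_N.+1) < m by apply: (gdiag_lt (HdT _ dT)); rewrite !inE eqxx orbT.
  rewrite inordK; lia.
- have : (inord (apex S) : 'I_N.+1) \in [set (inord (apex T) : 'I_N.+1); (inord m : 'I_N.+1)].
    by rewrite -E !inE eqxx.
  rewrite !inE -!val_eqE /= !inordK; lia.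
Qed.

Definition Pm N m := forall k (c : {set {set 'I_N.+1}} -> nat),
  (forall T, gtri m T -> c T < k) ->
  (forall T T', gtri m T -> gtri m T' -> [disjoint T & T'] -> apex T != apex T' -> c T != c T') ->
  m - 2 <= k.

Lemma gtri3_set0 N : gtri 3 (set0 : {set {set 'I_N.+1}}).
Proof.
split; [by move=> d; rewrite inE | split; first by move=> d e; rewrite inE].
by move=> d; rewrite (negbTE (no_gdiag3 _)).
Qed.

Lemma P_base N : Pm N 3.
Proof. move=> k c Hlt _; have := Hlt _ (gtri3_set0 N); lia. Qed.

Lemma P_step N m : 3 <= m -> m <= N -> Pm N m -> Pm N m.+1.
Proof.
move=> m3 mN IH k c Hlt Hpr.
have N0 : 0 < N by lia.
have gF := gtri_F m3 mN.
set al := c (Fset N m).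
have alk : al < k by apply: Hlt.
pose x S := if c (Bset m S) != al then c (Bset m S) else c (Aset m S).
have xne : forall S, gtri m S -> x S != al.
  move=> S g; rewrite /x; case: ifP => // _.
  apply: Hpr; [exact: (gtri_A m3 mN g) | exact: gF | exact: (disj_AF m3 mN g) |].
  by rewrite apex_A // apex_F //; lia.
have xlt : forall S, gtri m S -> x S < k.
  by move=> S g; rewrite /x; case: ifP => _; apply: Hlt; [apply: gtri_B | apply: gtri_A].
have BB : forall S T, gtri m S -> gtri m T -> [disjoint S & T] -> apex S != apex T ->
    c (Bset m S) != c (Bset m T).
  move=> S T gS gT d ne; apply: Hpr; [exact: (gtri_B m3 mN gS)|exact: (gtri_B m3 mN gT)|exact: (disj_BB m3 mN gS gT d ne)|].
  by rewrite !apex_B.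
pose c' S := if al < x S then (x S).-1 else x S.
have := IH k.-1 c'.
have H1 : forall T, gtri m T -> c' T < k.-1.
  move=> T g; have := xne T g; have := xlt T g; rewrite /c'; case: ifP; lia.
have H2 : forall S T, gtri m S -> gtri m T -> [disjoint S & T] -> apex S != apex T ->
    c' S != c' T.
  move=> S T gS gT d ne.
  have : x S != x T.
    rewrite /x; case: ifP => hS; case: ifP => hT.
    - exact: BB.
    - apply: Hpr; [exact: (gtri_B m3 mN gS)|exact: (gtri_A m3 mN gT)|exact: (disj_BA m3 mN gS gT d)|].
      rewrite apex_B // apex_A //; have := apex_le N0 m3 gS; lia.
    - apply: Hpr; [exact: (gtri_A m3 mN gS)|exact: (gtri_B m3 mN gT)|rewrite disjoint_sym; apply: (disj_BA m3 mN gT gS); rewrite disjoint_sym //|].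
      rewrite apex_B // apex_A //; have := apex_le N0 m3 gT; lia.
    - move/negbFE/eqP: hS => hS; move/negbFE/eqP: hT => hT.
      by have := BB S T gS gT d ne; rewrite hS hT eqxx.
  have := xne S gS; have := xne T gT; rewrite /c'.
  case: ifP; case: ifP; lia.
move=> /(_ H1 H2); lia.
Qed.

Lemma P_all N m : 3 <= m -> m <= N.+1 -> Pm N m.
Proof.
elim: m => [//|m IHm] m3 mN.
case: (ltngtP m 2) => [|m2|->]; [lia | | exact: P_base].
apply: P_step; [lia|lia|apply: IHm; lia].
Qed.

Theorem theorem1p1 (n : nat) (hn : 3 <= n) :
  kneser_triang_chromatic_number n (n - 2).
Proof.
case: n hn => [//|N] hn; split; first by apply: upper; lia.
move=> k [f [Hf1 Hf2]].
apply: (P_all (_ : 3 <= N.+1) (leqnn _) (c := f)) => //.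
  by move=> T /tri_eq; apply: Hf1.
move=> T T' /tri_eq g /tri_eq g' d ne; apply: Hf2 => //.
by apply/eqP => E; move: ne; rewrite E eqxx.
Qed.
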